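(* The following contraction rules are height-preserving admissible in $\mathsf{G}(\mathbf{KT}^+_D)$: for all finite multisets $\Gamma,\Delta$ of formulas, every finite multiset $\Sigma$ of outmost-boxed formulas, every formula $A$, every $G\in\mathsf{Grp}$ and every $n$: if $\Sigma\mid\Gamma\Rightarrow\Delta,A,A$ has a derivation of height at most $n$ then so does $\Sigma\mid\Gamma\Rightarrow\Delta,A$; if $\Sigma\mid A,A,\Gamma\Rightarrow\Delta$ has a derivation of height at most $n$ then so does $\Sigma\mid A,\Gamma\Rightarrow\Delta$; and if $\Sigma,D_GA,D_GA\mid\Gamma\Rightarrow\Delta$ has a derivation of height at most $n$ then so does $\Sigma,D_GA\mid\Gamma\Rightarrow\Delta$.
   Context: Language: fix a finite nonempty set $\mathsf{Agt}$ of agents and a countable set $\mathsf{Prop}$ of propositional variables; $\mathsf{Grp}$ is the set of nonempty subsets of $\mathsf{Agt}$. Formulas: $\alpha::=p\mid\bot\mid\alpha\wedge\alpha\mid\alpha\vee\alpha\mid\alpha\rightarrow\alpha\mid\neg\alpha\mid D_G\alpha$ ($p\in\mathsf{Prop}$, $G\in\mathsf{Grp}$). Outmost-boxed formula: one of the form $D_G\gamma$. Calculus $\mathsf{G}(\mathbf{KT}^+_D)$ (a derivation is a finite tree built from initial sequents by the rules; its height is the maximum length of a branch from the end sequent to an initial sequent): a T-sequent $\Sigma\mid\Gamma\Rightarrow\Delta$ consists of finite multisets $\Gamma,\Delta$ of formulas and a finite multiset $\Sigma$ of outmost-boxed formulas. Initial sequents: $\Sigma\mid\Gamma,p\Rightarrow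 p,\Delta$ ($p\in\mathsf{Prop}$) and $\Sigma\mid\bot,\Gamma\Rightarrow\Delta$. Propositional rules (with $\Sigma$ unchanged): $(R\wedge)$ from $\Sigma\mid\Gamma\Rightarrow\Delta,\alpha_1$ and $\Sigma\mid\Gamma\Rightarrow\Delta,\alpha_2$ infer $\Sigma\mid\Gamma\Rightarrow\Delta,\alpha_1\wedge\alpha_2$; $(L\wedge)$ from $\Sigma\mid\alpha_1,\alpha_2,\Gamma\Rightarrow\Delta$ infer $\Sigma\mid\alpha_1\wedge\alpha_2,\Gamma\Rightarrow\Delta$; $(R\vee)$ from $\Sigma\mid\Gamma\Rightarrow\Delta,\alpha_1,\alpha_2$ infer $\Sigma\mid\Gamma\Rightarrow\Delta,\alpha_1\vee\alpha_2$; $(L\vee)$ from $\Sigma\mid\alpha_1,\Gamma\Rightarrow\Delta$ and $\Sigma\mid\alpha_2,\Gamma\Rightarrow\Delta$ infer $\Sigma\mid\alpha_1\vee\alpha_2,\Gamma\Rightarrow\Delta$; $(R\rightarrow)$ from $\Sigma\mid\alpha_1,\Gamma\Rightarrow\Delta,\alpha_2$ infer $\Sigma\mid\Gamma\Rightarrow\Delta,\alpha_1\rightarrow\alpha_2$; $(L\rightarrow)$ from $\Sigma\mid\Gamma\Rightarrow\Delta,\alpha_1$ and $\Sigma\mid\alpha_2,\Gamma\Rightarrow\Delta$ infer $\Sigma\mid\alpha_1\rightarrow\alpha_2,\Gamma\Rightarrow\Delta$; $(R\neg)$ from $\Sigma\mid\alpha,\Gamma\Rightarrow\Delta$ infer $\Sigma\mid\Gamma\Rightarrow\Delta,\neg\alpha$;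 $(L\neg)$ from $\Sigma\mid\Gamma\Rightarrow\Delta,\alpha$ infer $\Sigma\mid\neg\alpha,\Gamma\Rightarrow\Delta$. Modal rules: $(D_K^+)$: from $\emptyset\mid\alpha_1,\dots,\alpha_n\Rightarrow\beta$ ($n\ge0$) infer $\Sigma,D_{G_1}\alpha_1,\dots,D_{G_n}\alpha_n\mid\Pi\Rightarrow D_G\beta,\Omega$, provided $G_i\subseteq G$ for all $i$, $\Sigma$ consists only of formulas $D_H\gamma$ with $H\not\subseteq G$, $\Pi$ only of propositional variables and $\bot$, and $\Omega$ only of propositional variables, $\bot$ and outmost-boxed formulas; $(D_T^+)$: from $D_G\alpha,\Sigma\mid\Gamma,\alpha\Rightarrow\Delta$ infer $\Sigma\mid\Gamma,D_G\alpha\Rightarrow\Delta$. *)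

(* Defs.v *)
From mathcomp Require Import all_boot.
From Stdlib Require Import List Permutation.
Import ListNotations.

Set Implicit Arguments.
Unset Strict Implicit.
Unset Printing Implicit Defensive.

Section Calculus.
Variable Agt : finType.

Definition grp := {G : {set Agt} | G != set0}.

Inductive form : Type :=
| Var : nat -> form
| Bot : form
| And : form -> form -> form
| Or : form -> form -> form
| Imp : form -> form -> form
| Neg : form -> form
| Box : grp -> form -> form.

(* An outmost-boxed formula D_G g is represented by the pair (G, g). *)
Definition boxed := (grp * form)%type.
Definition unbox (b : boxed) : form := Box b.1 b.2.

(* A T-sequent  Sigma | Gamma => Delta ; finite multisets are lists taken up
   to permutation (every rule conclusion is closed under permutation). *)
Record tseq := TSeq { tS : list boxed; tL : list form; tR : list form }.

Definition tperm (s t : tseq) : Prop :=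
  Permutation (tS s) (tS t) /\ Permutation (tL s) (tL t) /\ Permutation (tR s) (tR t).

Definition atom_or_bot (a : form) : Prop :=
  match a with Var _ | Bot => True | _ => False end.
Definition atom_bot_or_boxed (a : form) : Prop :=
  match a with Var _ | Bot | Box _ _ => True | _ => False end.

Inductive deriv : tseq -> Type :=
| Init S G D p s : tperm s (TSeq S (Var p :: G) (Var p :: D)) -> deriv s
| InitBot S G D s : tperm s (TSeq S (Bot :: G) D) -> deriv s
| RAnd S G D a1 a2 s :
    deriv (TSeq S G (a1 :: D)) -> deriv (TSeq S G (a2 :: D)) ->
    tperm s (TSeq S G (And a1 a2 :: D)) -> deriv s
| LAnd S G D a1 a2 s :
    deriv (TSeq S (a1 :: a2 :: G) D) ->
    tperm s (TSeq S (And a1 a2 :: G) D) -> deriv s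
| ROr S G D a1 a2 s :
    deriv (TSeq S G (a1 :: a2 :: D)) ->
    tperm s (TSeq S G (Or a1 a2 :: D)) -> deriv s
| LOr S G D a1 a2 s :
    deriv (TSeq S (a1 :: G) D) -> deriv (TSeq S (a2 :: G) D) ->
    tperm s (TSeq S (Or a1 a2 :: G) D) -> deriv s
| RImp S G D a1 a2 s :
    deriv (TSeq S (a1 :: G) (a2 :: D)) ->
    tperm s (TSeq S G (Imp a1 a2 :: D)) -> deriv s
| LImp S G D a1 a2 s :
    deriv (TSeq S G (a1 :: D)) -> deriv (TSeq S (a2 :: G) D) ->
    tperm s (TSeq S (Imp a1 a2 :: G) D) -> deriv s
| RNeg S G D a s :
    deriv (TSeq S (a :: G) D) ->
    tperm s (TSeq S G (Neg a :: D)) -> deriv s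
| LNeg S G D a s :
    deriv (TSeq S G (a :: D)) ->
    tperm s (TSeq S (Neg a :: G) D) -> deriv s
| DK (S l : list boxed) (Pi Om : list form) (G : grp) (b : form) s :
    deriv (TSeq [] (map snd l) [b]) ->
    Forall (fun p : boxed => val p.1 \subset val G) l ->
    Forall (fun p : boxed => ~~ (val p.1 \subset val G)) S ->
    Forall atom_or_bot Pi ->
    Forall atom_bot_or_boxed Om ->
    tperm s (TSeq (S ++ l) Pi (Box G b :: Om)) -> deriv s
| DT S G D (H : grp) a s :
    deriv (TSeq ((H, a) :: S) (a :: G) D) ->
    tperm s (TSeq S (Box H a :: G) D) -> deriv s.

Fixpoint height (s : tseq) (d : deriv s) : nat :=
  match d with
  | Init _ _ _ _ _ _ | InitBot _ _ _ _ _ => 0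
  | RAnd _ _ _ _ _ _ d1 d2 _ => (maxn (height d1) (height d2)).+1
  | LAnd _ _ _ _ _ _ d1 _ => (height d1).+1
  | ROr _ _ _ _ _ _ d1 _ => (height d1).+1
  | LOr _ _ _ _ _ _ d1 d2 _ => (maxn (height d1) (height d2)).+1
  | RImp _ _ _ _ _ _ d1 _ => (height d1).+1
  | LImp _ _ _ _ _ _ d1 d2 _ => (maxn (height d1) (height d2)).+1
  | RNeg _ _ _ _ _ d1 _ => (height d1).+1
  | LNeg _ _ _ _ _ d1 _ => (height d1).+1
  | DK _ _ _ _ _ _ _ d1 _ _ _ _ _ => (height d1).+1
  | DT _ _ _ _ _ _ d1 _ => (height d1).+1
  end.

Definition derivable_h (n : nat) (s : tseq) : Prop :=
  exists d : deriv s, height d <= n.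

End Calculus.

(* Main.v *)
Require Import Defs.
From mathcomp Require Import all_boot.
From Stdlib Require Import List.
Import ListNotations.
From mathcomp Require Import zify.
From Stdlib Require Import Permutation Lia.

Set Implicit Arguments.
Unset Strict Implicit.
Unset Printing Implicit Defensive.

Section Aux.
Variable Agt : finType.
Notation form := (form Agt).
Notation boxed := (boxed Agt).
Notation dh := (@derivable_h Agt).

Lemma grp_dec (g h : grp Agt) : {g = h} + {g <> h}.
Proof. exact: eq_comparable. Qed.

Lemma form_dec (x y : form) : {x = y} + {x <> y}.
Proof. decide equality; first (by apply PeanoNat.Nat.eq_dec); apply grp_dec. Qed.

Lemma boxed_dec (x y : boxed) : {x = y} + {x <> y}.
Proof.
case: x => g a; case: y => h b.
case: (grp_dec g h) => [->|ne]; last by right; case.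
case: (form_dec a b) => [->|ne]; [by left | by right; case].
Qed.

Ltac perm_solve :=
  let x := fresh "x" in
  match goal with
  | |- @Permutation form ?l1 ?l2 =>
      apply (proj2 (Permutation_count_occ form_dec l1 l2)); intro x;
      repeat match goal with H : @Permutation form ?a ?b |- _ =>
        pose proof (proj1 (Permutation_count_occ form_dec a b) H x); clear H end
  | |- @Permutation boxed ?l1 ?l2 =>
      apply (proj2 (Permutation_count_occ boxed_dec l1 l2)); intro x;
      repeat match goal with H : @Permutation boxed ?a ?b |- _ =>
        pose proof (proj1 (Permutation_count_occ boxed_dec a b) H x); clear H end
  end;
  repeat match goal with H : Permutation _ _ |- _ => clear H end;
  repeat (first [ rewrite count_occ_app
                 | match goal with H : context [count_occ _ _ _] |- _ => rewrite count_occ_app in H end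
                 | progress simpl count_occ in * ]);
  repeat (match goal with |- context [form_dec ?a ?b] => destruct (form_dec a b)
           | H : context [form_dec ?a ?b] |- _ => destruct (form_dec a b)
           | |- context [boxed_dec ?a ?b] => destruct (boxed_dec a b)
           | H : context [boxed_dec ?a ?b] |- _ => destruct (boxed_dec a b) end);
  try subst; try congruence; lia.


Lemma test (a b c : form) l1 l2 l3 : Permutation l1 (a :: l2) -> Permutation l2 (b :: l3) ->
  Permutation (l1 ++ [c]) (c :: b :: a :: l3).
Proof. intros. perm_solve. Qed.



Lemma tperm_sym (s t : tseq Agt) : tperm s t -> tperm t s.
Proof. by case=> [h1 [h2 h3]]; split; [|split]; apply Permutation_sym. Qed.
Lemma tperm_trans (s t u : tseq Agt) : tperm s t -> tperm t u -> tperm s u.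
Proof. by case=> [h1 [h2 h3]] [k1 [k2 k3]]; split; [|split]; eapply Permutation_trans; eauto. Qed.

Definition retarget (s t : tseq Agt) (h : tperm s t) (d : deriv s) : deriv t :=
  match d in deriv s0 return tperm s0 t -> deriv t with
  | @Init _ Sg G D p s0 H => fun h => Init (tperm_trans (tperm_sym h) H)
  | @InitBot _ Sg G D s0 H => fun h => InitBot (tperm_trans (tperm_sym h) H)
  | @RAnd _ Sg G D a1 a2 s0 d1 d2 H => fun h => RAnd d1 d2 (tperm_trans (tperm_sym h) H)
  | @LAnd _ Sg G D a1 a2 s0 d1 H => fun h => LAnd d1 (tperm_trans (tperm_sym h) H)
  | @ROr _ Sg G D a1 a2 s0 d1 H => fun h => ROr d1 (tperm_trans (tperm_sym h) H)
  | @LOr _ Sg G D a1 a2 s0 d1 d2 H => fun h => LOr d1 d2 (tperm_trans (tperm_sym h) H)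
  | @RImp _ Sg G D a1 a2 s0 d1 H => fun h => RImp d1 (tperm_trans (tperm_sym h) H)
  | @LImp _ Sg G D a1 a2 s0 d1 d2 H => fun h => LImp d1 d2 (tperm_trans (tperm_sym h) H)
  | @RNeg _ Sg G D a s0 d1 H => fun h => RNeg d1 (tperm_trans (tperm_sym h) H)
  | @LNeg _ Sg G D a s0 d1 H => fun h => LNeg d1 (tperm_trans (tperm_sym h) H)
  | @DK _ Sg l Pi Om G b s0 d1 f1 f2 f3 f4 H => fun h => DK d1 f1 f2 f3 f4 (tperm_trans (tperm_sym h) H)
  | @DT _ Sg G D H a s0 d1 K => fun h => DT d1 (tperm_trans (tperm_sym h) K)
  end h.

Lemma height_retarget s t (h : tperm s t) (d : deriv s) : height (retarget h d) = height d.
Proof. by case: d h. Qed.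

Lemma dh_perm n s t : tperm s t -> dh n s -> dh n t.
Proof. move=> h [d hd]; exists (retarget h d); by rewrite height_retarget. Qed.

Lemma dh_perm' n s t : dh n s -> tperm s t -> dh n t.
Proof. move=> d h; exact: dh_perm h d. Qed.

Lemma dh_mono n m s : n <= m -> dh n s -> dh m s.
Proof. move=> le [d hd]; exists d; exact: leq_trans hd le. Qed.

Inductive prule : list (list boxed * list form * list form) -> list form -> list form -> Prop :=
| prRAnd a1 a2 : prule [([],[],[a1]); ([],[],[a2])] [] [And a1 a2]
| prLAnd a1 a2 : prule [([],[a1;a2],[])] [And a1 a2] []
| prROr a1 a2 : prule [([],[],[a1;a2])] [] [Or a1 a2]
| prLOr a1 a2 : prule [([],[a1],[]); ([],[a2],[])] [Or a1 a2] []
| prRImp a1 a2 : prule [([],[a1],[a2])] [] [Imp a1 a2]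
| prLImp a1 a2 : prule [([],[],[a1]); ([],[a2],[])] [Imp a1 a2] []
| prRNeg a : prule [([],[a],[])] [] [Neg a]
| prLNeg a : prule [([],[],[a])] [Neg a] []
| prDT H a : prule [([(H,a)],[a],[])] [Box H a] [].

Definition prem (p : list boxed * list form * list form) S G D : tseq Agt :=
  TSeq (p.1.1 ++ S) (p.1.2 ++ G) (p.2 ++ D).

Ltac tp := split; [|split]; cbn [tS tL tR prem fst snd]; perm_solve.

Lemma tperm_refl (s : tseq Agt) : tperm s s.
Proof. by split; [|split]. Qed.

Lemma dh_prule n prs pL pR S G D : prule prs pL pR ->
  Forall (fun p => dh n (prem p S G D)) prs -> dh n.+1 (TSeq S (pL ++ G) (pR ++ D)).
Proof.
case=> [a1 a2|a1 a2|a1 a2|a1 a2|a1 a2|a1 a2|a|a|H a] F;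
  repeat match goal with F : Forall _ (_ :: _) |- _ => inversion F; subst; clear F end;
  repeat match goal with F : dh _ _ |- _ => let d := fresh "d" in let h := fresh "h" in destruct F as [d h] end; rewrite /prem /=; simpl in *.
- by exists (RAnd d0 d (tperm_refl _)); rewrite /= ?ltnS ?geq_max ?h ?h0.
- by exists (LAnd d (tperm_refl _)); rewrite /= ?ltnS ?geq_max ?h ?h0.
- by exists (ROr d (tperm_refl _)); rewrite /= ?ltnS ?geq_max ?h ?h0.
- by exists (LOr d0 d (tperm_refl _)); rewrite /= ?ltnS ?geq_max ?h ?h0.
- by exists (RImp d (tperm_refl _)); rewrite /= ?ltnS ?geq_max ?h ?h0.
- by exists (LImp d0 d (tperm_refl _)); rewrite /= ?ltnS ?geq_max ?h ?h0.
- by exists (RNeg d (tperm_refl _)); rewrite /= ?ltnS ?geq_max ?h ?h0.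
- by exists (LNeg d (tperm_refl _)); rewrite /= ?ltnS ?geq_max ?h ?h0.
- by exists (DT d (tperm_refl _)); rewrite /= ?ltnS ?geq_max ?h ?h0.
Qed.


Definition DKcond (Sg l : list boxed) (Pi Om : list form) (Gr : grp Agt) :=
  Forall (fun p : boxed => val p.1 \subset val Gr) l /\
  Forall (fun p : boxed => ~~ (val p.1 \subset val Gr)) Sg /\
  Forall (@atom_or_bot Agt) Pi /\ Forall (@atom_bot_or_boxed Agt) Om.

Lemma dh_cases n s : dh n s ->
  (exists Sg G D p, tperm s (TSeq Sg (Var Agt p :: G) (Var Agt p :: D))) \/
  (exists Sg G D, tperm s (TSeq Sg (Bot Agt :: G) D)) \/
  (exists n' Sg l Pi Om Gr b, n = n'.+1 /\ dh n' (TSeq [] (map snd l) [b]) /\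
      DKcond Sg l Pi Om Gr /\ tperm s (TSeq (Sg ++ l) Pi (Box Gr b :: Om))) \/
  (exists n' prs pL pR Sg G D, n = n'.+1 /\ prule prs pL pR /\
      tperm s (TSeq Sg (pL ++ G) (pR ++ D)) /\ Forall (fun p => dh n' (prem p Sg G D)) prs).
Proof.
case=> d hd; destruct d as
  [Sg G D p s0 H | Sg G D s0 H | Sg G D a1 a2 s0 d1 d2 H | Sg G D a1 a2 s0 d1 H
  | Sg G D a1 a2 s0 d1 H | Sg G D a1 a2 s0 d1 d2 H | Sg G D a1 a2 s0 d1 H
  | Sg G D a1 a2 s0 d1 d2 H | Sg G D a s0 d1 H | Sg G D a s0 d1 H
  | Sg l Pi Om Gr b s0 d1 f1 f2 f3 f4 H | Sg G D Hg a s0 d1 H]; simpl in hd.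
- by left; exists Sg, G, D, p.
- by right; left; exists Sg, G, D.
- do 3 right; case: n hd => // n hd.
  exists n, [([],[],[a1]); ([],[],[a2])], [], [And a1 a2], Sg, G, D; split; first done; split; first constructor; split; first exact H.
  by constructor; [|constructor; [|constructor]]; [exists d1 | exists d2]; move: hd; rewrite ltnS geq_max => /andP [].
- do 3 right; case: n hd => // n hd.
  exists n, [([],[a1;a2],[])], [And a1 a2], [], Sg, G, D; split; first done; split; first constructor; split; first exact H.
  by constructor; [exists d1|constructor].
- do 3 right; case: n hd => // n hd.
  exists n, [([],[],[a1;a2])], [], [Or a1 a2], Sg, G, D; split; first done; split; first constructor; split; first exact H.
  by constructor; [exists d1|constructor].
- do 3 right; case: n hd => // n hd.
  exists n, [([],[a1],[]); ([],[a2],[])], [Or a1 a2], [], Sg, G, D; split; first done; split; first constructor; split; first exact H.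
  by constructor; [|constructor; [|constructor]]; [exists d1 | exists d2]; move: hd; rewrite ltnS geq_max => /andP [].
- do 3 right; case: n hd => // n hd.
  exists n, [([],[a1],[a2])], [], [Imp a1 a2], Sg, G, D; split; first done; split; first constructor; split; first exact H.
  by constructor; [exists d1|constructor].
- do 3 right; case: n hd => // n hd.
  exists n, [([],[],[a1]); ([],[a2],[])], [Imp a1 a2], [], Sg, G, D; split; first done; split; first constructor; split; first exact H.
  by constructor; [|constructor; [|constructor]]; [exists d1 | exists d2]; move: hd; rewrite ltnS geq_max => /andP [].
- do 3 right; case: n hd => // n hd.
  exists n, [([],[a],[])], [], [Neg a], Sg, G, D; split; first done; split; first constructor; split; first exact H.
  by constructor; [exists d1|constructor].
- do 3 right; case: n hd => // n hd.
  exists n, [([],[],[a])], [Neg a], [], Sg, G, D; split; first done; split; first constructor; split; first exact H.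
  by constructor; [exists d1|constructor].
- do 2 right; left; case: n hd => // n hd.
  exists n, Sg, l, Pi, Om, Gr, b; split => //; split; first by exists d1.
  by split => //; split.
- do 3 right; case: n hd => // n hd.
  exists n, [([(Hg,a)],[a],[])], [Box Hg a], [], Sg, G, D; split; first done; split; first constructor; split; first exact H.
  by constructor; [exists d1|constructor].
Qed.

Lemma dh_DK n Sg l Pi Om Gr b : dh n (TSeq [] (map snd l) [b]) -> DKcond Sg l Pi Om Gr ->
  dh n.+1 (TSeq (Sg ++ l) Pi (Box Gr b :: Om)).
Proof. by case=> d hd [f1 [f2 [f3 f4]]]; exists (DK d f1 f2 f3 f4 (tperm_refl _)). Qed.

Lemma dh_init n Sg G D p : In (Var Agt p) G -> In (Var Agt p) D -> dh n (TSeq Sg G D).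
Proof.
move=> hG hD; case: (in_split _ _ hG) => G1 [G2 ->]; case: (in_split _ _ hD) => D1 [D2 ->].
have h : tperm (TSeq Sg (G1 ++ Var Agt p :: G2) (D1 ++ Var Agt p :: D2)) (TSeq Sg (Var Agt p :: G1 ++ G2) (Var Agt p :: D1 ++ D2)).
  by tp.
by exists (Init h).
Qed.

Lemma dh_bot n Sg G D : In (Bot Agt) G -> dh n (TSeq Sg G D).
Proof.
move=> hG; case: (in_split _ _ hG) => G1 [G2 ->].
have h : tperm (TSeq Sg (G1 ++ Bot Agt :: G2) D) (TSeq Sg (Bot Agt :: G1 ++ G2) D).
  by tp.
by exists (InitBot h).
Qed.


Lemma perm_in (T : Type) (l l' : list T) x : Permutation l l' -> In x l -> In x l'.
Proof. exact: Permutation_in. Qed.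

Lemma in_appP (T : Type) (x : T) l1 l2 : In x (l1 ++ l2) -> In x l1 \/ In x l2.
Proof. exact: in_app_or. Qed.

Lemma split1 (X p l l' : list form) : length X <= 1 -> length p <= 1 ->
  Permutation (X ++ l) (p ++ l') ->
  (X = p /\ X <> [] /\ Permutation l l') \/
  (exists l'', Permutation l' (X ++ l'') /\ Permutation l (p ++ l'')).
Proof.
case: X => [|x [|y X]] /=; last by lia.
  by move=> _ _ h; right; exists l'; split => //; apply: Permutation_refl.
case: p => [|z [|w p]] /=; last by lia.
  by move=> _ _ h; right; exists l; split; [apply: Permutation_sym | apply: Permutation_refl].
move=> _ _ h; case: (form_dec x z) => [e|ne]; first subst z.
  by left; split; first done; split; [discriminate | exact: Permutation_cons_inv h].
right.
have : In x (z :: l') by apply: (perm_in h); left.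
case=> [e|]; first by congruence.
move=> hx; case: (in_split _ _ hx) => l1 [l2 e]; subst l'.
exists (l1 ++ l2); split; perm_solve.
Qed.

Lemma split2 (A : form) (p l l' : list form) : length p <= 1 ->
  Permutation (A :: A :: l) (p ++ l') ->
  (p = [A] /\ Permutation l' (A :: l)) \/
  (exists l'', Permutation l' (A :: A :: l'') /\ Permutation l (p ++ l'')).
Proof.
move=> hp h.
case: (split1 (X := [A]) (l := A :: l) erefl hp h) => [[<- [_ h1]]|[l1 [h1 h2]]].
  by left; split => //; apply: Permutation_sym.
case: (split1 (X := [A]) (l := l) erefl hp h2) => [[<- [_ h3]]|[l2 [h3 h4]]].
  by left; split => //; perm_solve.
by right; exists l2; split => //; perm_solve.
Qed.

Lemma Forall_sub (T : Type) (P : T -> Prop) (l l' : list T) :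
  (forall x, In x l' -> In x l) -> Forall P l -> Forall P l'.
Proof. move=> h /Forall_forall F; apply/Forall_forall => x /h; exact: F. Qed.

Lemma prule_shape prs pL pR : prule prs pL pR ->
  (pL = [] /\ length pR = 1) \/ (pR = [] /\ length pL = 1).
Proof. by case=> *; [left|right|left|right|left|right|left|right|right]. Qed.

Lemma ctx_step (XS YS : list boxed) (XL XR YL YR : list form) n prs pL pR S' G' D' S1 G1 D1 :
  (forall Sg G D, dh n (TSeq (XS ++ Sg) (XL ++ G) (XR ++ D)) ->
                  dh n (TSeq (YS ++ Sg) (YL ++ G) (YR ++ D))) ->
  prule prs pL pR -> Forall (fun p => dh n (prem p S' G' D')) prs ->
  Permutation S' (XS ++ S1) -> Permutation G' (XL ++ G1) -> Permutation D' (XR ++ D1) ->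
  dh n.+1 (TSeq (YS ++ S1) (pL ++ YL ++ G1) (pR ++ YR ++ D1)).
Proof.
move=> IH Hpr HF h1 h2 h3; apply: (dh_prule Hpr).
apply: Forall_impl HF; case=> [[Si Li] Ri] /= Hp; rewrite /prem /=.
have H : dh n (TSeq (XS ++ (Si ++ S1)) (XL ++ (Li ++ G1)) (XR ++ (Ri ++ D1))).
  by apply: (dh_perm' Hp); tp.
move/IH: H => H; apply: (dh_perm' H); tp.
Qed.

Lemma strong_ind (P : nat -> Prop) : (forall n, (forall m, m < n -> P m) -> P n) -> forall n, P n.
Proof.
move=> step n; elim: n.+1 {-2}n (ltnSn n) => [|k IHk] m hm //.
by apply: step => m' hm'; apply: IHk; lia.
Qed.

Lemma inv_gen (XL XR : list form) (YS : list boxed) (YL YR : list form) :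
  length XL + length XR = 1 ->
  (forall f, In f XL -> ~ atom_or_bot f) ->
  (forall f, In f XR -> ~ atom_bot_or_boxed f) ->
  (forall n prs Sg G D, prule prs XL XR -> Forall (fun p => dh n (prem p Sg G D)) prs ->
       dh n.+1 (TSeq (YS ++ Sg) (YL ++ G) (YR ++ D))) ->
  forall n Sg G D, dh n (TSeq Sg (XL ++ G) (XR ++ D)) ->
                   dh n (TSeq (YS ++ Sg) (YL ++ G) (YR ++ D)).
Proof.
move=> hlen hL hR hP.
apply: (strong_ind (P := fun n => forall Sg G D, dh n (TSeq Sg (XL ++ G) (XR ++ D)) ->
                   dh n (TSeq (YS ++ Sg) (YL ++ G) (YR ++ D)))).
move=> n IH Sg G D /dh_cases
  [ [Sg' [G' [D' [p [h1 [h2 h3]]]]]]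
  | [ [Sg' [G' [D' [h1 [h2 h3]]]]]
    | [ [n' [Sg' [l [Pi [Om [Gr [b [en [_ [[_ [_ [fPi fOm]]] [h1 [h2 h3]]]]]]]]]]]]
      | [n' [prs [pL [pR [Sg' [G' [D' [en [Hpr [[h1 [h2 h3]] HF]]]]]]]]]] ] ] ]; cbn [tS tL tR] in *.
- have hG : In (Var Agt p) (YL ++ G).
    apply: in_or_app; right.
    have : In (Var Agt p) (XL ++ G) by apply: (perm_in (Permutation_sym h2)); left.
    by move=> Hin; case: (in_appP Hin) => // /hL H; case: (H I).
  have hD : In (Var Agt p) (YR ++ D).
    apply: in_or_app; right.
    have : In (Var Agt p) (XR ++ D) by apply: (perm_in (Permutation_sym h3)); left.
    by move=> Hin; case: (in_appP Hin) => // /hR H; case: (H I).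
  exact: dh_init hG hD.
- apply: dh_bot; apply: in_or_app; right.
  have : In (Bot Agt) (XL ++ G) by apply: (perm_in (Permutation_sym h2)); left.
  by move=> Hin; case: (in_appP Hin) => // /hL H; case: (H I).
- exfalso; clear -hlen hL hR h2 h3 fPi fOm; case: XL hlen hL h2 => [|f XL]; case: XR hR h3 => [|g XR] //= hR h3 hlen hL h2.
  + have : In g (Box Gr b :: Om) by apply: (perm_in h3); left.
    case=> [e|hg]; first by apply: (hR g); [left | rewrite -e].
    by apply: (hR g); [left | move/Forall_forall: fOm; apply].
  + have : In f Pi by apply: (perm_in h2); left.
    by move=> hf; apply: (hL f); [left | move/Forall_forall: fPi; apply].
  + by lia.
- subst n.
  have hXL : length XL <= 1 by lia.
  have hXR : length XR <= 1 by lia.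
  have shape := prule_shape Hpr.
  have hpL : length pL <= 1 by case: shape => [[-> _]|[_ ->]].
  have hpR : length pR <= 1 by case: shape => [[_ ->]|[-> _]].
  case: (split1 hXL hpL h2) => [[eL [neL hG]] | [G1 [hG1 hG2]]].
    subst pL.
    have epR : pR = [] by case: shape => [[e _]|[-> _]] //.
    have eXR : XR = [] by destruct XR; [done | destruct XL; [done | simpl in hlen; lia]].
    subst pR XR.
    have := hP n' prs Sg' G' D' Hpr HF.
    move=> H; apply: (dh_perm' H); tp.
  case: (split1 hXR hpR h3) => [[eR [neR hD]] | [D1 [hD1 hD2]]].
    subst pR.
    have epL : pL = [] by case: shape => [[-> _]|[e _]] //.
    have eXL : XL = [] by destruct XL; [done | destruct XR; [done | simpl in hlen; lia]].
    subst pL XL.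
    have := hP n' prs Sg' G' D' Hpr HF.
    move=> H; apply: (dh_perm' H); tp.
  have := ctx_step (XS := [::]) (S1 := Sg') (IH n' (ltnSn n')) Hpr HF (Permutation_refl _) hG1 hD1.
  move=> H; apply: (dh_perm' H); tp.
Qed.


Ltac hLtac := move=> f /=; first [ by case | by move=> [<-|[]] //= [] ].

Lemma invL_And n Sg G D a b : dh n (TSeq Sg (And a b :: G) D) -> dh n (TSeq Sg (a :: b :: G) D).
Proof.
move=> Hd; apply: (inv_gen (XL := [And a b]) (XR := [::]) (YS := [::]) (YL := [a; b]) (YR := [::]) _ _ _ _ Hd);
  [ done | hLtac | hLtac | ].
move=> m prs Sg' G' D' Hpr HF; inversion Hpr; subst;
  repeat (match goal with F : Forall _ (_ :: _) |- _ => inversion F; subst; clear F end);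
  apply: dh_mono (leqnSn m) _; assumption.
Qed.

Lemma invL_Or1 n Sg G D a b : dh n (TSeq Sg (Or a b :: G) D) -> dh n (TSeq Sg (a :: G) D).
Proof.
move=> Hd; apply: (inv_gen (XL := [Or a b]) (XR := [::]) (YS := [::]) (YL := [a]) (YR := [::]) _ _ _ _ Hd);
  [ done | hLtac | hLtac | ].
move=> m prs Sg' G' D' Hpr HF; inversion Hpr; subst;
  repeat (match goal with F : Forall _ (_ :: _) |- _ => inversion F; subst; clear F end);
  apply: dh_mono (leqnSn m) _; assumption.
Qed.

Lemma invL_Or2 n Sg G D a b : dh n (TSeq Sg (Or a b :: G) D) -> dh n (TSeq Sg (b :: G) D).
Proof.
move=> Hd; apply: (inv_gen (XL := [Or a b]) (XR := [::]) (YS := [::]) (YL := [b]) (YR := [::]) _ _ _ _ Hd);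
  [ done | hLtac | hLtac | ].
move=> m prs Sg' G' D' Hpr HF; inversion Hpr; subst;
  repeat (match goal with F : Forall _ (_ :: _) |- _ => inversion F; subst; clear F end);
  apply: dh_mono (leqnSn m) _; assumption.
Qed.

Lemma invL_Imp1 n Sg G D a b : dh n (TSeq Sg (Imp a b :: G) D) -> dh n (TSeq Sg G (a :: D)).
Proof.
move=> Hd; apply: (inv_gen (XL := [Imp a b]) (XR := [::]) (YS := [::]) (YL := [::]) (YR := [a]) _ _ _ _ Hd);
  [ done | hLtac | hLtac | ].
move=> m prs Sg' G' D' Hpr HF; inversion Hpr; subst;
  repeat (match goal with F : Forall _ (_ :: _) |- _ => inversion F; subst; clear F end);
  apply: dh_mono (leqnSn m) _; assumption.
Qed.

Lemma invL_Imp2 n Sg G D a b : dh n (TSeq Sg (Imp a b :: G) D) -> dh n (TSeq Sg (b :: G) D).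
Proof.
move=> Hd; apply: (inv_gen (XL := [Imp a b]) (XR := [::]) (YS := [::]) (YL := [b]) (YR := [::]) _ _ _ _ Hd);
  [ done | hLtac | hLtac | ].
move=> m prs Sg' G' D' Hpr HF; inversion Hpr; subst;
  repeat (match goal with F : Forall _ (_ :: _) |- _ => inversion F; subst; clear F end);
  apply: dh_mono (leqnSn m) _; assumption.
Qed.

Lemma invL_Neg n Sg G D a : dh n (TSeq Sg (Neg a :: G) D) -> dh n (TSeq Sg G (a :: D)).
Proof.
move=> Hd; apply: (inv_gen (XL := [Neg a]) (XR := [::]) (YS := [::]) (YL := [::]) (YR := [a]) _ _ _ _ Hd);
  [ done | hLtac | hLtac | ].
move=> m prs Sg' G' D' Hpr HF; inversion Hpr; subst;
  repeat (match goal with F : Forall _ (_ :: _) |- _ => inversion F; subst; clear F end);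
  apply: dh_mono (leqnSn m) _; assumption.
Qed.

Lemma invL_DT n Sg G D (H : grp Agt) a : dh n (TSeq Sg (Box H a :: G) D) -> dh n (TSeq ((H, a) :: Sg) (a :: G) D).
Proof.
move=> Hd; apply: (inv_gen (XL := [Box H a]) (XR := [::]) (YS := [(H, a)]) (YL := [a]) (YR := [::]) _ _ _ _ Hd);
  [ done | hLtac | hLtac | ].
move=> m prs Sg' G' D' Hpr HF; inversion Hpr; subst;
  repeat (match goal with F : Forall _ (_ :: _) |- _ => inversion F; subst; clear F end);
  apply: dh_mono (leqnSn m) _; assumption.
Qed.

Lemma invR_And1 n Sg G D a b : dh n (TSeq Sg G (And a b :: D)) -> dh n (TSeq Sg G (a :: D)).
Proof.
move=> Hd; apply: (inv_gen (XL := [::]) (XR := [And a b]) (YS := [::]) (YL := [::]) (YR := [a]) _ _ _ _ Hd);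
  [ done | hLtac | hLtac | ].
move=> m prs Sg' G' D' Hpr HF; inversion Hpr; subst;
  repeat (match goal with F : Forall _ (_ :: _) |- _ => inversion F; subst; clear F end);
  apply: dh_mono (leqnSn m) _; assumption.
Qed.

Lemma invR_And2 n Sg G D a b : dh n (TSeq Sg G (And a b :: D)) -> dh n (TSeq Sg G (b :: D)).
Proof.
move=> Hd; apply: (inv_gen (XL := [::]) (XR := [And a b]) (YS := [::]) (YL := [::]) (YR := [b]) _ _ _ _ Hd);
  [ done | hLtac | hLtac | ].
move=> m prs Sg' G' D' Hpr HF; inversion Hpr; subst;
  repeat (match goal with F : Forall _ (_ :: _) |- _ => inversion F; subst; clear F end);
  apply: dh_mono (leqnSn m) _; assumption.
Qed.

Lemma invR_Or n Sg G D a b : dh n (TSeq Sg G (Or a b :: D)) -> dh n (TSeq Sg G (a :: b :: D)).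
Proof.
move=> Hd; apply: (inv_gen (XL := [::]) (XR := [Or a b]) (YS := [::]) (YL := [::]) (YR := [a; b]) _ _ _ _ Hd);
  [ done | hLtac | hLtac | ].
move=> m prs Sg' G' D' Hpr HF; inversion Hpr; subst;
  repeat (match goal with F : Forall _ (_ :: _) |- _ => inversion F; subst; clear F end);
  apply: dh_mono (leqnSn m) _; assumption.
Qed.

Lemma invR_Imp n Sg G D a b : dh n (TSeq Sg G (Imp a b :: D)) -> dh n (TSeq Sg (a :: G) (b :: D)).
Proof.
move=> Hd; apply: (inv_gen (XL := [::]) (XR := [Imp a b]) (YS := [::]) (YL := [a]) (YR := [b]) _ _ _ _ Hd);
  [ done | hLtac | hLtac | ].
move=> m prs Sg' G' D' Hpr HF; inversion Hpr; subst;
  repeat (match goal with F : Forall _ (_ :: _) |- _ => inversion F; subst; clear F end);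
  apply: dh_mono (leqnSn m) _; assumption.
Qed.

Lemma invR_Neg n Sg G D a : dh n (TSeq Sg G (Neg a :: D)) -> dh n (TSeq Sg (a :: G) D).
Proof.
move=> Hd; apply: (inv_gen (XL := [::]) (XR := [Neg a]) (YS := [::]) (YL := [a]) (YR := [::]) _ _ _ _ Hd);
  [ done | hLtac | hLtac | ].
move=> m prs Sg' G' D' Hpr HF; inversion Hpr; subst;
  repeat (match goal with F : Forall _ (_ :: _) |- _ => inversion F; subst; clear F end);
  apply: dh_mono (leqnSn m) _; assumption.
Qed.


Definition CR n := forall Sg G D A, dh n (TSeq Sg G (A :: A :: D)) -> dh n (TSeq Sg G (A :: D)).
Definition CL n := forall Sg G D A, dh n (TSeq Sg (A :: A :: G) D) -> dh n (TSeq Sg (A :: G) D).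
Definition CS n := forall Sg G D B, dh n (TSeq (B :: B :: Sg) G D) -> dh n (TSeq (B :: Sg) G D).

Ltac pc H := apply: (dh_perm' H); tp.

Ltac getprems :=
  match goal with F : Forall _ (_ :: _) |- _ =>
    let P := fresh "P" in let F1 := fresh "F" in
    inversion F as [|? ? P F1]; subst; clear F;
    try (match goal with F2 : Forall _ (_ :: _) |- _ =>
      let P' := fresh "Q" in let F3 := fresh "F" in
      inversion F2 as [|? ? P' F3]; subst; clear F2 end)
  end.

Lemma in_cons2 (T : Type) (x A : T) l : In x (A :: A :: l) -> In x (A :: l).
Proof. by case=> [->|]; [left|]. Qed.

Lemma CL_step n : (forall m, m < n -> CR m /\ CL m /\ CS m) -> CL n.
Proof.
move=> IH Sg G D A /dh_cases
  [ [Sg' [G' [D' [p [h1 [h2 h3]]]]]]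
  | [ [Sg' [G' [D' [h1 [h2 h3]]]]]
    | [ [n' [Sg' [l [Pi [Om [Gr [b [en [Pd [[fl [fS [fPi fOm]]] [h1 [h2 h3]]]]]]]]]]]]
      | [n' [prs [pL [pR [Sg' [G' [D' [en [Hpr [[h1 [h2 h3]] HF]]]]]]]]]] ] ] ]; cbn [tS tL tR] in *.
- have hG : In (Var Agt p) (A :: G) by apply: in_cons2; apply: (perm_in (Permutation_sym h2)); left.
  have hD : In (Var Agt p) D by apply: (perm_in (Permutation_sym h3)); left.
  exact: dh_init hG hD.
- apply: dh_bot; apply: in_cons2; apply: (perm_in (Permutation_sym h2)); by left.
- subst n.
  have Q : dh n'.+1 (TSeq (Sg' ++ l) (A :: G) (Box Gr b :: Om)).
    apply: dh_DK Pd _; split => //; split => //; split => //.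
    apply: Forall_sub fPi => x hx; apply: (perm_in h2); exact: in_cons hx.
  pc Q.
- subst n.
  have [CRn [CLn CSn]] := IH n' (ltnSn n'); rewrite /CR /CL /CS in CRn CLn CSn.
  have shape := prule_shape Hpr.
  have hpL : length pL <= 1 by case: shape => [[-> _]|[_ ->]].
  case: (split2 hpL h2) => [[epL hG] | [G1 [hG1 hG2]]]; last first.
    have Q := ctx_step (XS := [::]) (XL := [A; A]) (XR := [::]) (YS := [::]) (YL := [A]) (YR := [::])
       (S1 := Sg') (G1 := G1) (D1 := D') (fun Sg G D => CLn Sg G D A) Hpr HF (Permutation_refl _) hG1 (Permutation_refl _).
    pc Q.
  subst pL.
  have epR : pR = [] by case: shape => [[e _]|[-> _]].
  subst pR.
  destruct A as [p| |a1 a2|a1 a2|a1 a2|a1|Hg a1]; inversion Hpr; subst; getprems.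
  + have P1 : dh n' (TSeq Sg' (And a1 a2 :: a1 :: a2 :: G) D') by pc P.
    move/invL_And: P1 => P1.
    have P2 : dh n' (TSeq Sg' (a1 :: a1 :: a2 :: a2 :: G) D') by pc P1.
    move/CLn: P2 => P2.
    have P3 : dh n' (TSeq Sg' (a2 :: a2 :: a1 :: G) D') by pc P2.
    move/CLn: P3 => P3.
    have Q : dh n'.+1 (TSeq Sg' ([And a1 a2] ++ G) ([::] ++ D')).
      by apply: (dh_prule (prLAnd a1 a2)); constructor; [pc P3 | constructor].
    pc Q.
  + have P1 : dh n' (TSeq Sg' (Or a1 a2 :: a1 :: G) D') by pc P.
    move/invL_Or1: P1 => /CLn P1.
    have P2 : dh n' (TSeq Sg' (Or a1 a2 :: a2 :: G) D') by pc Q.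
    move/invL_Or2: P2 => /CLn P2.
    have R : dh n'.+1 (TSeq Sg' ([Or a1 a2] ++ G) ([::] ++ D')).
      by apply: (dh_prule (prLOr a1 a2)); constructor; [pc P1 | constructor; [pc P2 | constructor]].
    pc R.
  + have P1 : dh n' (TSeq Sg' (Imp a1 a2 :: G) (a1 :: D')) by pc P.
    move/invL_Imp1: P1 => /CRn P1.
    have P2 : dh n' (TSeq Sg' (Imp a1 a2 :: a2 :: G) D') by pc Q.
    move/invL_Imp2: P2 => /CLn P2.
    have R : dh n'.+1 (TSeq Sg' ([Imp a1 a2] ++ G) ([::] ++ D')).
      by apply: (dh_prule (prLImp a1 a2)); constructor; [pc P1 | constructor; [pc P2 | constructor]].
    pc R.
  + have P1 : dh n' (TSeq Sg' (Neg a1 :: G) (a1 :: D')) by pc P.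
    move/invL_Neg: P1 => /CRn P1.
    have R : dh n'.+1 (TSeq Sg' ([Neg a1] ++ G) ([::] ++ D')).
      by apply: (dh_prule (prLNeg a1)); constructor; [pc P1 | constructor].
    pc R.
  + have P1 : dh n' (TSeq ((Hg, a1) :: Sg') (Box Hg a1 :: a1 :: G) D') by pc P.
    move/invL_DT: P1 => /CSn /CLn P1.
    have R : dh n'.+1 (TSeq Sg' ([Box Hg a1] ++ G) ([::] ++ D')).
      by apply: (dh_prule (prDT Hg a1)); constructor; [pc P1 | constructor].
    pc R.
Qed.


Lemma CR_step n : (forall m, m < n -> CR m /\ CL m /\ CS m) -> CR n.
Proof.
move=> IH Sg G D A /dh_cases
  [ [Sg' [G' [D' [p [h1 [h2 h3]]]]]]
  | [ [Sg' [G' [D' [h1 [h2 h3]]]]]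
    | [ [n' [Sg' [l [Pi [Om [Gr [b [en [Pd [[fl [fS [fPi fOm]]] [h1 [h2 h3]]]]]]]]]]]]
      | [n' [prs [pL [pR [Sg' [G' [D' [en [Hpr [[h1 [h2 h3]] HF]]]]]]]]]] ] ] ]; cbn [tS tL tR] in *.
- have hG : In (Var Agt p) G by apply: (perm_in (Permutation_sym h2)); left.
  have hD : In (Var Agt p) (A :: D) by apply: in_cons2; apply: (perm_in (Permutation_sym h3)); left.
  exact: dh_init hG hD.
- apply: dh_bot; apply: (perm_in (Permutation_sym h2)); by left.
- subst n.
  have [Om' [hO1 hO2]] : exists Om', Permutation (Box Gr b :: Om') (A :: D) /\
                                     (forall x, In x Om' -> In x Om).
    case: (split1 (X := [A]) (p := [Box Gr b]) (l := A :: D) (l' := Om) erefl erefl h3)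
      => [[e [_ hO]] | [O1 [hO1 hO2]]].
      case: e => e; subst A; exists D; split; first by apply: Permutation_refl.
      by move=> x hx; apply: (perm_in hO); right.
    exists O1; split; first by apply: Permutation_sym.
    by move=> x hx; apply: (perm_in (Permutation_sym hO1)); right.
  have Q : dh n'.+1 (TSeq (Sg' ++ l) Pi (Box Gr b :: Om')).
    apply: dh_DK Pd _; split => //; split => //; split => //.
    exact: Forall_sub fOm.
  pc Q.
- subst n.
  have [CRn [CLn CSn]] := IH n' (ltnSn n'); rewrite /CR /CL /CS in CRn CLn CSn.
  have shape := prule_shape Hpr.
  have hpR : length pR <= 1 by case: shape => [[_ ->]|[-> _]].
  case: (split2 hpR h3) => [[epR hD] | [D1 [hD1 hD2]]]; last first.
    have Q := ctx_step (XS := [::]) (XL := [::]) (XR := [A; A]) (YS := [::]) (YL := [::]) (YR := [A])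
       (S1 := Sg') (G1 := G') (D1 := D1) (fun Sg G D => CRn Sg G D A) Hpr HF (Permutation_refl _) (Permutation_refl _) hD1.
    pc Q.
  subst pR.
  have epL : pL = [] by case: shape => [[-> _]|[e _]].
  subst pL.
  destruct A as [p| |a1 a2|a1 a2|a1 a2|a1|Hg a1]; inversion Hpr; subst; getprems.
  + have P1 : dh n' (TSeq Sg' G (And a1 a2 :: a1 :: D)) by pc P.
    move/invR_And1: P1 => /CRn P1.
    have P2 : dh n' (TSeq Sg' G (And a1 a2 :: a2 :: D)) by pc Q.
    move/invR_And2: P2 => /CRn P2.
    have R : dh n'.+1 (TSeq Sg' ([::] ++ G) ([And a1 a2] ++ D)).
      by apply: (dh_prule (prRAnd a1 a2)); constructor; [pc P1 | constructor; [pc P2 | constructor]].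
    pc R.
  + have P1 : dh n' (TSeq Sg' G (Or a1 a2 :: a1 :: a2 :: D)) by pc P.
    move/invR_Or: P1 => P1.
    have P2 : dh n' (TSeq Sg' G (a1 :: a1 :: a2 :: a2 :: D)) by pc P1.
    move/CRn: P2 => P2.
    have P3 : dh n' (TSeq Sg' G (a2 :: a2 :: a1 :: D)) by pc P2.
    move/CRn: P3 => P3.
    have R : dh n'.+1 (TSeq Sg' ([::] ++ G) ([Or a1 a2] ++ D)).
      by apply: (dh_prule (prROr a1 a2)); constructor; [pc P3 | constructor].
    pc R.
  + have P1 : dh n' (TSeq Sg' (a1 :: G) (Imp a1 a2 :: a2 :: D)) by pc P.
    move/invR_Imp: P1 => /CLn /CRn P1.
    have R : dh n'.+1 (TSeq Sg' ([::] ++ G) ([Imp a1 a2] ++ D)).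
      by apply: (dh_prule (prRImp a1 a2)); constructor; [pc P1 | constructor].
    pc R.
  + have P1 : dh n' (TSeq Sg' (a1 :: G) (Neg a1 :: D)) by pc P.
    move/invR_Neg: P1 => /CLn P1.
    have R : dh n'.+1 (TSeq Sg' ([::] ++ G) ([Neg a1] ++ D)).
      by apply: (dh_prule (prRNeg a1)); constructor; [pc P1 | constructor].
    pc R.
Qed.


Lemma pick2 (B : boxed) Sg X Y : Permutation (B :: B :: Sg) (X ++ Y) -> ~ In B X ->
  exists Y1, Permutation Y (B :: B :: Y1) /\ Permutation Sg (X ++ Y1).
Proof.
move=> h nX.
have : In B (X ++ Y) by apply: (perm_in h); left.
move=> Hin; case: (in_appP Hin) => // hY.
case: (in_split _ _ hY) => Y1 [Y2 eY]; subst Y.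
have h' : Permutation (B :: Sg) (X ++ Y1 ++ Y2) by perm_solve.
have : In B (X ++ (Y1 ++ Y2)) by apply: (perm_in h'); left.
move=> Hin2; case: (in_appP Hin2) => // hY'.
case: (in_split _ _ hY') => Z1 [Z2 eZ].
have e' : Permutation (Y1 ++ Y2) (Z1 ++ B :: Z2) by rewrite eZ; apply: Permutation_refl.
exists (Z1 ++ Z2); split; perm_solve.
Qed.

Lemma pick2' (B : boxed) Sg X Y : Permutation (B :: B :: Sg) (X ++ Y) -> ~ In B Y ->
  exists X1, Permutation X (B :: B :: X1) /\ Permutation Sg (X1 ++ Y).
Proof.
move=> h nY.
have h' : Permutation (B :: B :: Sg) (Y ++ X) by perm_solve.
case: (pick2 h' nY) => X1 [hX hS]; exists X1; split => //; perm_solve.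
Qed.

Lemma CS_step n : (forall m, m < n -> CR m /\ CL m /\ CS m) -> CS n.
Proof.
move=> IH Sg G D B /dh_cases
  [ [Sg' [G' [D' [p [h1 [h2 h3]]]]]]
  | [ [Sg' [G' [D' [h1 [h2 h3]]]]]
    | [ [n' [Sg' [l [Pi [Om [Gr [b [en [Pd [[fl [fS [fPi fOm]]] [h1 [h2 h3]]]]]]]]]]]]
      | [n' [prs [pL [pR [Sg' [G' [D' [en [Hpr [[h1 [h2 h3]] HF]]]]]]]]]] ] ] ]; cbn [tS tL tR] in *.
- have hG : In (Var Agt p) G by apply: (perm_in (Permutation_sym h2)); left.
  have hD : In (Var Agt p) D by apply: (perm_in (Permutation_sym h3)); left.
  exact: dh_init hG hD.
- apply: dh_bot; apply: (perm_in (Permutation_sym h2)); by left.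
- subst n.
  have [CRn [CLn CSn]] := IH n' (ltnSn n'); rewrite /CR /CL /CS in CRn CLn CSn.
  case: B h1 => Gx A h1.
  case: (boolP (val Gx \subset val Gr)) => hsub.
  + have nX : ~ In (Gx, A) Sg'.
      by move=> hin; move/Forall_forall: fS => /(_ _ hin) /=; rewrite hsub.
    case: (pick2 h1 nX) => l1 [hl hS].
    have hm := Permutation_map snd hl; simpl in hm.
    have P1 : dh n' (TSeq [::] (A :: A :: map snd l1) [b]) by pc Pd.
    move/CLn: P1 => P1.
    have Q : dh n'.+1 (TSeq (Sg' ++ (Gx, A) :: l1) Pi (Box Gr b :: Om)).
      apply: (dh_DK (l := (Gx, A) :: l1) P1); split; last by split => //; split.
      constructor => //; apply: Forall_sub fl => x hx.
      by apply: (perm_in (Permutation_sym hl)); right; right.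
    pc Q.
  + have nY : ~ In (Gx, A) l.
      by move=> hin; move/Forall_forall: fl => /(_ _ hin) /= h; rewrite h in hsub.
    case: (pick2' h1 nY) => S1 [hX hS].
    have Q : dh n'.+1 (TSeq (((Gx, A) :: S1) ++ l) Pi (Box Gr b :: Om)).
      apply: (dh_DK Pd); split => //; split; last by split.
      constructor => //; apply: Forall_sub fS => x hx.
      by apply: (perm_in (Permutation_sym hX)); right; right.
    pc Q.
- subst n.
  have [CRn [CLn CSn]] := IH n' (ltnSn n'); rewrite /CR /CL /CS in CRn CLn CSn.
  have Q := ctx_step (XS := [B; B]) (XL := [::]) (XR := [::]) (YS := [B]) (YL := [::]) (YR := [::])
       (S1 := Sg) (G1 := G') (D1 := D') (fun Sg G D => CSn Sg G D B) Hpr HF (Permutation_sym h1)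
       (Permutation_refl _) (Permutation_refl _).
  pc Q.
Qed.

Lemma contr_all n : CR n /\ CL n /\ CS n.
Proof.
elim/strong_ind: n => n IH.
split; [exact: CR_step | split; [exact: CL_step | exact: CS_step]].
Qed.

End Aux.

Unset Implicit Arguments.
Set Strict Implicit.

Theorem proposition6p11 (Agt : finType) (hAgt : 0 < #|Agt|) :
  forall (S : list (boxed Agt)) (Gam Del : list (form Agt)) (A : form Agt)
         (G : grp Agt) (n : nat),
    (derivable_h n (TSeq S Gam (Del ++ [A; A])) ->
     derivable_h n (TSeq S Gam (Del ++ [A]))) /\
    (derivable_h n (TSeq S (A :: A :: Gam) Del) ->
     derivable_h n (TSeq S (A :: Gam) Del)) /\
    (derivable_h n (TSeq (S ++ [(G, A); (G, A)]) Gam Del) ->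
     derivable_h n (TSeq (S ++ [(G, A)]) Gam Del)).
Proof.
move=> S Gam Del A G n.
have [hR [hL hS]] := contr_all Agt n.
split; [|split].
- move=> H.
  have H1 : derivable_h n (TSeq S Gam (A :: A :: Del)).
    apply: (dh_perm' H); split; [exact: Permutation_refl | split; [exact: Permutation_refl|]].
    exact: (Permutation_app_comm Del [A; A]).
  have := hR S Gam Del A H1 => H2.
  apply: (dh_perm' H2); split; [exact: Permutation_refl | split; [exact: Permutation_refl|]].
  exact: (Permutation_app_comm [A] Del).
- exact: hL.
- move=> H.
  have H1 : derivable_h n (TSeq ((G, A) :: (G, A) :: S) Gam Del).
    apply: (dh_perm' H); split; [|split; exact: Permutation_refl].
    exact: (Permutation_app_comm S [(G, A); (G, A)]).
  have := hS S Gam Del (G, A) H1 => H2.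
  apply: (dh_perm' H2); split; [|split; exact: Permutation_refl].
  exact: (Permutation_app_comm [(G, A)] S).
Qed.
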